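(* Let $R$ be a de Groot continuum with two distinct points $b_1,b_2$. Let $Y=(\mathbb{Z}\times R)/\sigma$, where $\mathbb{Z}$ is discrete and $\sigma$ is the equivalence relation whose only nontrivial identifications are $(k,b_2)\sim(k+1,b_1)$ for all $k\in\mathbb{Z}$. Then $Y$ is a connected locally compact space whose homeomorphism group $\mathcal{H}(Y)$ is isomorphic to the infinite cyclic group $\mathbb{Z}$; the isomorphism is given by letting $m\in\mathbb{Z}$ act via $\sigma(k,x)\mapsto\sigma(m+k,x)$.
   Context: A de Groot continuum (rigid continuum) is a compact connected metric space $R$ with more than one point such that every continuous map $R\to R$ is either the identity map or a constant map. $\mathcal{H}(Y)$ denotes the group of all homeomorphisms of a space $Y$ onto itself. The space $Y$ is the realisation of the directed chain $\mathbb{Z}$ (Cayley graph of $(\mathbb{Z},\{1\})$) obtained by inserting a copy of $R$ into each edge $k\to k+1$. *)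

(* Defs.v *)
From Stdlib Require Import Reals ZArith List Relations.
Open Scope R_scope.

Definition set (T : Type) := T -> Prop.

Definition continuous {S T : Type} (oS : set S -> Prop) (oT : set T -> Prop)
  (f : S -> T) : Prop :=
  forall V : set T, oT V -> oS (fun x => V (f x)).

Definition homeomorphism {T : Type} (oT : set T -> Prop) (h : T -> T) : Prop :=
  exists g : T -> T,
    (forall y, g (h y) = y) /\ (forall y, h (g y) = y) /\
    continuous oT oT h /\ continuous oT oT g.

Definition compact_set {T : Type} (oT : set T -> Prop) (K : set T) : Prop :=
  forall (I : Type) (U : I -> set T),
    (forall i, oT (U i)) ->
    (forall x, K x -> exists i, U i x) ->
    exists l : list I, forall x, K x -> exists i, In i l /\ U i x.

Definition connected_space {T : Type} (oT : set T -> Prop) : Prop :=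
  forall U V : set T, oT U -> oT V ->
    (forall x, U x \/ V x) -> (forall x, ~ (U x /\ V x)) ->
    (forall x, ~ U x) \/ (forall x, ~ V x).

Definition locally_compact {T : Type} (oT : set T -> Prop) : Prop :=
  forall x : T, exists (U K : set T),
    oT U /\ U x /\ (forall y, U y -> K y) /\ compact_set oT K.

Definition is_metric {X : Type} (d : X -> X -> R) : Prop :=
  (forall x y, 0 <= d x y) /\
  (forall x y, d x y = 0 <-> x = y) /\
  (forall x y, d x y = d y x) /\
  (forall x y z, d x z <= d x y + d y z).

Definition metric_open {X : Type} (d : X -> X -> R) (U : set X) : Prop :=
  forall x, U x -> exists eps, 0 < eps /\ forall y, d x y < eps -> U y.

Definition deGroot_continuum {X : Type} (d : X -> X -> R) : Prop :=
  is_metric d /\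
  compact_set (metric_open d) (fun _ => True) /\
  connected_space (metric_open d) /\
  (exists x y : X, x <> y) /\
  (forall f : X -> X, continuous (metric_open d) (metric_open d) f ->
     (forall x, f x = x) \/ (exists c, forall x, f x = c)).

(* Product topology on Z x X, with Z discrete. *)
Definition prod_open {X : Type} (d : X -> X -> R) (W : set (Z * X)) : Prop :=
  forall k : Z, metric_open d (fun x => W (k, x)).

Definition sigma_gen {X : Type} (b1 b2 : X) (a c : Z * X) : Prop :=
  exists k : Z, a = (k, b2) /\ c = ((k + 1)%Z, b1).

Definition sigma {X : Type} (b1 b2 : X) : relation (Z * X) :=
  clos_refl_sym_trans (Z * X) (sigma_gen b1 b2).

(* The quotient Y = (Z x X)/sigma, as the type of sigma-classes. *)
Definition Yq {X : Type} (b1 b2 : X) : Type :=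
  { P : set (Z * X) | exists a, forall c, P c <-> sigma b1 b2 a c }.

Definition qmap {X : Type} (b1 b2 : X) (a : Z * X) : Yq b1 b2 :=
  exist _ (sigma b1 b2 a) (ex_intro _ a (fun c => conj (fun h => h) (fun h => h))).

Definition Y_open {X : Type} (d : X -> X -> R) (b1 b2 : X) (V : set (Yq b1 b2)) : Prop :=
  prod_open d (fun a => V (qmap b1 b2 a)).

(* Main.v *)
Require Import Defs.
From Stdlib Require Import Reals ZArith List Relations Lia Lra.
From Stdlib Require Import Classical ClassicalEpsilon FunctionalExtensionality PropExtensionality ProofIrrelevance.

Lemma sig_refl {X} (b1 b2 : X) a : Defs.sigma b1 b2 a a.
Proof. apply rst_refl. Qed.
Lemma sig_sym {X} (b1 b2 : X) a c : Defs.sigma b1 b2 a c -> Defs.sigma b1 b2 c a.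
Proof. apply rst_sym. Qed.
Lemma sig_trans {X} (b1 b2 : X) a c e : Defs.sigma b1 b2 a c -> Defs.sigma b1 b2 c e -> Defs.sigma b1 b2 a e.
Proof. apply rst_trans. Qed.
Lemma sig_jn {X} (b1 b2 : X) k : Defs.sigma b1 b2 (k, b2) ((k+1)%Z, b1).
Proof. apply rst_step. exists k; auto. Qed.

Lemma resp_sigma {X A} (b1 b2 : X) (f : Z * X -> A) :
  (forall k, f (k, b2) = f ((k+1)%Z, b1)) -> forall a c, Defs.sigma b1 b2 a c -> f a = f c.
Proof.
  intros H a c S. induction S.
  - destruct H0 as [k [-> ->]]. apply H.
  - reflexivity.
  - congruence.
  - congruence.
Qed.

Definition key {X} (b1 b2 : X) (a : Z * X) : Z * X :=
  if excluded_middle_informative (snd a = b2) then ((fst a + 1)%Z, b1) else a.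

Lemma key_sigma {X} (b1 b2 : X) : b1 <> b2 -> forall a c, Defs.sigma b1 b2 a c -> key b1 b2 a = key b1 b2 c.
Proof.
  intros Hb. apply resp_sigma. intro k. unfold key; simpl.
  destruct (excluded_middle_informative (b2 = b2)); [|congruence].
  destruct (excluded_middle_informative (b1 = b2)); [congruence|]. reflexivity.
Qed.

Lemma sigma_key {X} (b1 b2 : X) a : Defs.sigma b1 b2 a (key b1 b2 a).
Proof.
  destruct a as [k x]; unfold key; simpl.
  destruct (excluded_middle_informative (x = b2)).
  - subst. apply sig_jn.
  - apply sig_refl.
Qed.

Lemma exist_ext {A} (P : A -> Prop) (x y : A) (p : P x) (q : P y) : x = y -> exist P x p = exist P y q.
Proof. intros ->. f_equal. apply proof_irrelevance. Qed.

Lemma qmap_eq_iff {X} (b1 b2 : X) a c : qmap b1 b2 a = qmap b1 b2 c <-> Defs.sigma b1 b2 a c.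
Proof.
  split.
  - intro H. assert (E := f_equal (@proj1_sig _ _) H). simpl in E. rewrite E. apply sig_refl.
  - intro H. unfold qmap. apply exist_ext. extensionality e. apply propositional_extensionality.
    split; intro H'.
    + eapply sig_trans; [apply sig_sym, H|exact H'].
    + eapply sig_trans; [apply H|exact H'].
Qed.

Lemma qmap_surj {X} (b1 b2 : X) (y : Yq b1 b2) : exists a, qmap b1 b2 a = y.
Proof.
  destruct y as [P [a Ha]]. exists a. unfold qmap. apply exist_ext.
  extensionality c. apply propositional_extensionality. split; apply Ha.
Qed.

Definition rep {X} (b1 b2 : X) (y : Yq b1 b2) : Z * X :=
  proj1_sig (constructive_indefinite_description _ (qmap_surj b1 b2 y)).

Lemma rep_spec {X} (b1 b2 : X) y : qmap b1 b2 (rep b1 b2 y) = y.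
Proof. unfold rep. destruct (constructive_indefinite_description _ _). simpl. exact e. Qed.

Definition lift {X A} (b1 b2 : X) (f : Z * X -> A) (y : Yq b1 b2) : A := f (rep b1 b2 y).

Lemma lift_qmap {X A} (b1 b2 : X) (f : Z * X -> A) :
  (forall k, f (k, b2) = f ((k+1)%Z, b1)) -> forall a, lift b1 b2 f (qmap b1 b2 a) = f a.
Proof.
  intros H a. unfold lift. apply (resp_sigma b1 b2 f H).
  apply qmap_eq_iff. apply rep_spec.
Qed.

Lemma canon {X} (b1 b2 : X) : b1 <> b2 -> forall y : Yq b1 b2, exists i w, w <> b2 /\ y = qmap b1 b2 (i, w).
Proof.
  intros Hb y. destruct (qmap_surj b1 b2 y) as [[k x] <-].
  destruct (classic (x = b2)) as [->|n].
  - exists (k+1)%Z, b1. split; auto. apply qmap_eq_iff, sig_jn.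
  - exists k, x; auto.
Qed.

Lemma canon_inj {X} (b1 b2 : X) : b1 <> b2 -> forall i w i' w', w <> b2 -> w' <> b2 ->
  qmap b1 b2 (i, w) = qmap b1 b2 (i', w') -> i = i' /\ w = w'.
Proof.
  intros Hb i w i' w' n n' E. apply qmap_eq_iff in E. apply (key_sigma b1 b2 Hb) in E.
  unfold key in E; simpl in E.
  destruct (excluded_middle_informative (w = b2)); [congruence|].
  destruct (excluded_middle_informative (w' = b2)); [congruence|].
  injection E; auto.
Qed.

Definition fr {X} (b1 b2 : X) (j : Z) (a : Z * X) : X :=
  if Z_lt_dec (fst a) j then b1 else if Z.eq_dec (fst a) j then snd a else b2.

Lemma fr_resp {X} (b1 b2 : X) j k : fr b1 b2 j (k, b2) = fr b1 b2 j ((k+1)%Z, b1).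
Proof.
  unfold fr; simpl.
  destruct (Z_lt_dec k j); destruct (Z_lt_dec (k+1) j); try destruct (Z.eq_dec k j);
  try destruct (Z.eq_dec (k+1) j); try reflexivity; lia.
Qed.

Definition rr {X} (b1 b2 : X) j := lift b1 b2 (fr b1 b2 j).

Lemma rr_qmap {X} (b1 b2 : X) j a : rr b1 b2 j (qmap b1 b2 a) = fr b1 b2 j a.
Proof. apply lift_qmap. apply fr_resp. Qed.

Definition shq {X} (b1 b2 : X) (m : Z) (a : Z * X) := qmap b1 b2 ((m + fst a)%Z, snd a).

Definition Phi0 {X} (b1 b2 : X) (m : Z) := lift b1 b2 (shq b1 b2 m).

Lemma Phi0_qmap {X} (b1 b2 : X) m k x : Phi0 b1 b2 m (qmap b1 b2 (k, x)) = qmap b1 b2 ((m + k)%Z, x).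
Proof.
  unfold Phi0. rewrite lift_qmap; [reflexivity|].
  intro k'. unfold shq; simpl. apply qmap_eq_iff.
  replace (m + (k'+1))%Z with ((m+k')+1)%Z by lia. apply sig_jn.
Qed.

Lemma mo_ext {X} (d : X -> X -> R) (A B : set X) : (forall x, A x <-> B x) -> metric_open d A -> metric_open d B.
Proof.
  intros H HA x Bx. destruct (HA x (proj2 (H x) Bx)) as [e [he He]].
  exists e; split; auto. intros y hy. apply H, He, hy.
Qed.

Lemma mo_const {X} (d : X -> X -> R) (P : Prop) : metric_open d (fun _ => P).
Proof. intros x Hx. exists 1%R. split; [lra| auto]. Qed.

Lemma mo_and {X} (d : X -> X -> R) A B : metric_open d A -> metric_open d B -> metric_open d (fun x => A x /\ B x).
Proof.
  intros HA HB x [Ax Bx]. destruct (HA x Ax) as [e1 [h1 H1]]. destruct (HB x Bx) as [e2 [h2 H2]].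
  exists (Rmin e1 e2). split. apply Rmin_case; auto.
  intros y hy. split; [apply H1|apply H2]; eapply Rlt_le_trans; eauto; [apply Rmin_l|apply Rmin_r].
Qed.

Lemma mo_neq {X} (d : X -> X -> R) b : is_metric d -> metric_open d (fun z => z <> b).
Proof.
  intros [H0 [H1 [H2 H3]]] x hx. exists (d x b). split.
  - destruct (H0 x b) as [h|h]; auto. exfalso. apply hx, H1. auto.
  - intros y hy ->. lra.
Qed.
Lemma rr_cont {X} (d : X -> X -> R) (b1 b2 : X) j : continuous (Y_open d b1 b2) (metric_open d) (rr b1 b2 j).
Proof.
  intros V HV k. apply (mo_ext d (fun x => V (fr b1 b2 j (k, x)))).
  { intro x. rewrite rr_qmap. tauto. }
  unfold fr; simpl.
  destruct (Z_lt_dec k j); [apply mo_const|].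
  destruct (Z.eq_dec k j); [exact HV|apply mo_const].
Qed.

Lemma qmap_cont {X} (d : X -> X -> R) (b1 b2 : X) k : continuous (metric_open d) (Y_open d b1 b2) (fun x => qmap b1 b2 (k, x)).
Proof. intros V HV. exact (HV k). Qed.

Lemma cont_comp {A B C} oA oB oC (f : A -> B) (g : B -> C) :
  continuous oA oB f -> continuous oB oC g -> continuous oA oC (fun x => g (f x)).
Proof. intros Hf Hg V HV. exact (Hf _ (Hg V HV)). Qed.

Lemma third_point {X} (d : X -> X -> R) (b1 b2 : X) : deGroot_continuum d -> b1 <> b2 ->
  exists p, p <> b1 /\ p <> b2.
Proof.
  intros [Hm [_ [Hc _]]] Hb. apply NNPP. intro N.
  assert (All : forall x, x = b1 \/ x = b2).
  { intro x. apply NNPP. intro M. apply N. exists x. split; intro; apply M; auto. }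
  assert (Hn : forall b b', b <> b' -> metric_open d (fun x => x = b)).
  { intros b b' nb. apply (mo_ext d (fun x => x <> b')).
    - intro x. split.
      + intro h. destruct (All x) as [->| ->]; destruct (All b) as [e| e]; destruct (All b') as [e'|e'];
        subst; try congruence.
      + intros -> ; auto.
    - apply mo_neq; auto. }
  destruct (Hc (fun x => x = b1) (fun x => x = b2) (Hn _ _ Hb) (Hn _ _ (not_eq_sym Hb)) All)
    as [H|H].
  - intros x [-> ->]. auto.
  - apply (H b1); auto.
  - apply (H b2); auto.
Qed.

Lemma Y_connected {X} (d : X -> X -> R) (b1 b2 : X) : deGroot_continuum d -> b1 <> b2 ->
  connected_space (Y_open d b1 b2).
Proof.
  intros Hd Hb U V HU HV Cov Dis.
  destruct Hd as [Hm [_ [Hc _]]].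
  assert (Sl : forall k, (forall x, ~ U (qmap b1 b2 (k, x))) \/ (forall x, ~ V (qmap b1 b2 (k, x)))).
  { intro k. apply Hc; [apply HU|apply HV|intro; apply Cov|intro; apply Dis]. }
  assert (AllU : forall k, (exists x, U (qmap b1 b2 (k, x))) -> forall x, U (qmap b1 b2 (k, x))).
  { intros k [x0 Hx0] x. destruct (Sl k) as [S|S]. exfalso; exact (S x0 Hx0).
    destruct (Cov (qmap b1 b2 (k, x))); auto. exfalso; eapply S; eauto. }
  destruct (classic (exists y, U y)) as [[y0 Hy0]|NU].
  2:{ left. intros x Ux. apply NU; eauto. }
  right. destruct (qmap_surj b1 b2 y0) as [[k0 x0] E]. subst y0.
  assert (All : forall n, forall x, U (qmap b1 b2 ((k0 + n)%Z, x))).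
  { intro n. induction n using Z.peano_ind.
    - rewrite Z.add_0_r. apply AllU; eauto.
    - apply AllU. exists b1.
      assert (E : qmap b1 b2 ((k0 + Z.succ n)%Z, b1) = qmap b1 b2 ((k0 + n)%Z, b2)).
      { apply qmap_eq_iff, sig_sym. replace (k0 + Z.succ n)%Z with ((k0+n)+1)%Z by lia. apply sig_jn. }
      rewrite E. apply IHn.
    - apply AllU. exists b2.
      assert (E : qmap b1 b2 ((k0 + Z.pred n)%Z, b2) = qmap b1 b2 ((k0 + n)%Z, b1)).
      { apply qmap_eq_iff. replace (k0 + n)%Z with ((k0 + Z.pred n)+1)%Z by lia. apply sig_jn. }
      rewrite E. apply IHn. }
  intros y Vy. destruct (qmap_surj b1 b2 y) as [[k x] E]. subst y.
  apply (Dis (qmap b1 b2 (k, x))). split; auto.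
  replace k with (k0 + (k - k0))%Z by lia. apply All.
Qed.

Lemma Y_lc {X} (d : X -> X -> R) (b1 b2 : X) : deGroot_continuum d -> b1 <> b2 ->
  locally_compact (Y_open d b1 b2).
Proof.
  intros Hd Hb y. destruct Hd as [Hm [Hcomp _]].
  destruct (qmap_surj b1 b2 y) as [[k x] E]. subst y.
  exists (fun y => rr b1 b2 (k-1)%Z y <> b1 /\ rr b1 b2 (k+1)%Z y <> b2).
  exists (fun y => exists i x0, ((i = k-1)%Z \/ i = k \/ i = (k+1)%Z) /\ y = qmap b1 b2 (i, x0)).
  split; [|split; [|split]].
  - intro i. apply mo_and.
    + apply (rr_cont d b1 b2 (k-1)%Z (fun z => z <> b1)). apply mo_neq; auto.
    + apply (rr_cont d b1 b2 (k+1)%Z (fun z => z <> b2)). apply mo_neq; auto.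
  - rewrite !rr_qmap. unfold fr; simpl.
    destruct (Z_lt_dec k (k-1)); [lia|]. destruct (Z.eq_dec k (k-1)); [lia|].
    destruct (Z_lt_dec k (k+1)); [|lia]. split; auto.
  - intros y [H1 H2]. destruct (canon b1 b2 Hb y) as [i [w [nw ->]]].
    exists i, w. split; auto. rewrite rr_qmap in H1, H2. unfold fr in H1, H2; simpl in H1, H2.
    destruct (Z_lt_dec i (k-1)); [congruence|].
    destruct (Z_lt_dec i (k+1)); [lia|]. destruct (Z.eq_dec i (k+1)); [lia|congruence].
  - intros I U HU Cov.
    assert (Sl : forall i, ((i = k-1)%Z \/ i = k \/ i = (k+1)%Z) -> exists l : list I, forall x, exists t, In t l /\ U t (qmap b1 b2 (i, x))).
    { intros i Hi. destruct (Hcomp I (fun t x => U t (qmap b1 b2 (i, x)))) as [l Hl].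
      - intro t. apply (HU t i).
      - intros z _. apply Cov. exists i, z. split; auto.
      - exists l. intro z. apply Hl; auto. }
    destruct (Sl (k-1)%Z) as [l1 H1]; auto. destruct (Sl k) as [l2 H2]; auto. destruct (Sl (k+1)%Z) as [l3 H3]; auto.
    exists (l1 ++ l2 ++ l3). intros y [i [x' [Hi ->]]].
    destruct Hi as [->|[->| ->]].
    + destruct (H1 x') as [t [a b]]. exists t. split; auto. apply in_or_app; auto.
    + destruct (H2 x') as [t [a b]]. exists t. split; auto. apply in_or_app; right; apply in_or_app; auto.
    + destruct (H3 x') as [t [a b]]. exists t. split; auto. apply in_or_app; right; apply in_or_app; auto.
Qed.
Definition SS {X} (b1 b2 : X) (h : Yq b1 b2 -> Yq b1 b2) k j :=
  forall x, rr b1 b2 j (h (qmap b1 b2 (k, x))) = x.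

Lemma sep {X} (b1 b2 : X) : b1 <> b2 -> forall y y', (forall j, rr b1 b2 j y = rr b1 b2 j y') -> y = y'.
Proof.
  intros Hb y y' H.
  destruct (canon b1 b2 Hb y) as [i [w [nw ->]]]. destruct (canon b1 b2 Hb y') as [i' [w' [nw' ->]]].
  assert (Hi := H i). assert (Hi' := H i'). rewrite !rr_qmap in Hi, Hi'. unfold fr in Hi, Hi'; simpl in Hi, Hi'.
  destruct (Z_lt_dec i i); [lia|]. destruct (Z.eq_dec i i); [|lia].
  destruct (Z_lt_dec i' i'); [lia|]. destruct (Z.eq_dec i' i'); [|lia].
  destruct (Z_lt_dec i' i).
  - destruct (Z_lt_dec i i'); [lia|]. destruct (Z.eq_dec i i'); [lia|]. congruence.
  - destruct (Z.eq_dec i' i).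
    + subst. congruence.
    + destruct (Z_lt_dec i i'); [|lia]. congruence.
Qed.

Lemma SS_interior {X} (b1 b2 : X) h k j x : b1 <> b2 -> SS b1 b2 h k j -> x <> b1 -> x <> b2 ->
  h (qmap b1 b2 (k, x)) = qmap b1 b2 (j, x).
Proof.
  intros Hb HS n1 n2. assert (E := HS x).
  destruct (canon b1 b2 Hb (h (qmap b1 b2 (k, x)))) as [i [w [nw Ew]]].
  rewrite Ew in E |- *. rewrite rr_qmap in E. unfold fr in E; simpl in E.
  destruct (Z_lt_dec i j); [congruence|]. destruct (Z.eq_dec i j); [|congruence]. subst; auto.
Qed.

Lemma SS_exists {X} (d : X -> X -> R) (b1 b2 : X) h p : deGroot_continuum d -> b1 <> b2 ->
  p <> b1 -> p <> b2 -> continuous (Y_open d b1 b2) (Y_open d b1 b2) h ->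
  (forall y y', h y = h y' -> y = y') -> forall k, exists j, SS b1 b2 h k j.
Proof.
  intros Hd Hb n1 n2 Hc Hinj k. apply NNPP. intro N.
  assert (C : forall j, exists c, forall x, rr b1 b2 j (h (qmap b1 b2 (k, x))) = c).
  { intro j. destruct Hd as [_ [_ [_ [_ R]]]].
    destruct (R (fun x => rr b1 b2 j (h (qmap b1 b2 (k, x))))) as [I|Cst]; auto.
    - apply cont_comp with (oB := Y_open d b1 b2); [|apply rr_cont].
      apply cont_comp with (oB := Y_open d b1 b2); [apply qmap_cont|exact Hc].
    - exfalso. apply N. exists j. exact I. }
  assert (E : qmap b1 b2 (k, p) = qmap b1 b2 (k, b1)).
  { apply Hinj. apply (sep b1 b2 Hb). intro j. destruct (C j) as [c Hc']. rewrite !Hc'. auto. }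
  apply canon_inj in E; auto. destruct E; auto.
Qed.

Lemma SS_unique {X} (b1 b2 : X) h p k j j' : b1 <> b2 -> p <> b1 -> p <> b2 ->
  SS b1 b2 h k j -> SS b1 b2 h k j' -> j = j'.
Proof.
  intros Hb n1 n2 H H'. assert (E := SS_interior b1 b2 h k j p Hb H n1 n2).
  rewrite (SS_interior b1 b2 h k j' p Hb H' n1 n2) in E. apply canon_inj in E; auto. destruct E; auto.
Qed.

Lemma SS_inv {X} (b1 b2 : X) h g p k j k' : b1 <> b2 -> p <> b1 -> p <> b2 ->
  (forall y, g (h y) = y) -> SS b1 b2 h k j -> SS b1 b2 g j k' -> k = k'.
Proof.
  intros Hb n1 n2 Hgh H H'. assert (E := SS_interior b1 b2 g j k' p Hb H' n1 n2).
  rewrite <- (SS_interior b1 b2 h k j p Hb H n1 n2), Hgh in E. apply canon_inj in E; auto. destruct E; auto.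
Qed.

Lemma SS_junc {X} (b1 b2 : X) h k j1 j2 : b1 <> b2 -> SS b1 b2 h k j1 -> SS b1 b2 h (k+1)%Z j2 ->
  exists i w, w <> b2 /\ h (qmap b1 b2 (k, b2)) = qmap b1 b2 (i, w) /\ (j1 < i)%Z /\ ((i < j2)%Z \/ (i = j2 /\ w = b1)).
Proof.
  intros Hb H1 H2. assert (E1 := H1 b2). assert (E2 := H2 b1).
  assert (J : qmap b1 b2 ((k+1)%Z, b1) = qmap b1 b2 (k, b2)) by (apply qmap_eq_iff, sig_sym, sig_jn).
  rewrite J in E2.
  destruct (canon b1 b2 Hb (h (qmap b1 b2 (k, b2)))) as [i [w [nw Ew]]].
  rewrite Ew in E1, E2. rewrite rr_qmap in E1, E2. unfold fr in E1, E2; simpl in E1, E2.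
  exists i, w. split; auto. split; auto.
  destruct (Z_lt_dec i j1); [congruence|]. destruct (Z.eq_dec i j1); [congruence|].
  split; [lia|].
  destruct (Z_lt_dec i j2); [auto|]. destruct (Z.eq_dec i j2); [auto|congruence].
Qed.

Lemma mono_Z (s : Z -> Z) : (forall k, (s k < s (k+1))%Z) -> forall a b, (a < b)%Z -> (s a < s b)%Z.
Proof.
  intros H a b Hab. replace b with (a + Z.of_nat (S (Z.to_nat (b - a - 1))))%Z by lia.
  generalize (Z.to_nat (b - a - 1)). intro n. induction n.
  - replace (a + Z.of_nat 1)%Z with (a+1)%Z by lia. apply H.
  - replace (a + Z.of_nat (S (S n)))%Z with ((a + Z.of_nat (S n)) + 1)%Z by lia.
    specialize (H (a + Z.of_nat (S n))%Z). lia.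
Qed.
Lemma classify {X} (d : X -> X -> R) (b1 b2 : X) h : deGroot_continuum d -> b1 <> b2 ->
  homeomorphism (Y_open d b1 b2) h -> exists m, forall y, h y = Phi0 b1 b2 m y.
Proof.
  intros Hd Hb [g [Hgh [Hhg [Ch Cg]]]].
  destruct (third_point d b1 b2 Hd Hb) as [p [n1 n2]].
  assert (Ih : forall y y', h y = h y' -> y = y').
  { intros y y' E. rewrite <- (Hgh y), <- (Hgh y'), E. auto. }
  assert (Ig : forall y y', g y = g y' -> y = y').
  { intros y y' E. rewrite <- (Hhg y), <- (Hhg y'), E. auto. }
  assert (Eh := SS_exists d b1 b2 h p Hd Hb n1 n2 Ch Ih).
  assert (Eg := SS_exists d b1 b2 g p Hd Hb n1 n2 Cg Ig).
  assert (Xs : exists s, forall k, SS b1 b2 h k (s k)).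
  { exists (fun k => proj1_sig (constructive_indefinite_description _ (Eh k))).
    intro k. exact (proj2_sig (constructive_indefinite_description _ (Eh k))). }
  assert (Xs' : exists s, forall k, SS b1 b2 g k (s k)).
  { exists (fun k => proj1_sig (constructive_indefinite_description _ (Eg k))).
    intro k. exact (proj2_sig (constructive_indefinite_description _ (Eg k))). }
  destruct Xs as [s Hs]. destruct Xs' as [s' Hs'].
  assert (Inc : forall k, (s k < s (k+1))%Z).
  { intro k. destruct (SS_junc b1 b2 h k _ _ Hb (Hs k) (Hs (k+1)%Z)) as [i [w [_ [_ [A B]]]]]. lia. }
  assert (Inc' : forall k, (s' k < s' (k+1))%Z).
  { intro k. destruct (SS_junc b1 b2 g k _ _ Hb (Hs' k) (Hs' (k+1)%Z)) as [i [w [_ [_ [A B]]]]]. lia. }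
  assert (Mono' := mono_Z s' Inc').
  assert (Inv : forall k, s' (s k) = k).
  { intro k. symmetry. apply (SS_inv b1 b2 h g p k (s k)); auto. }
  assert (Step : forall k, s (k+1)%Z = (s k + 1)%Z).
  { intro k. assert (I1 := Inc k). destruct (Z.eq_dec (s (k+1)%Z) (s k + 1)%Z) as [e|ne]; auto.
    exfalso. assert (A := Mono' (s k) (s k + 1)%Z ltac:(lia)).
    assert (B := Mono' (s k + 1)%Z (s (k+1)%Z) ltac:(lia)).
    rewrite Inv in A, B. lia. }
  assert (Sm : forall k, s k = (k + s 0%Z)%Z).
  { intro k. induction k using Z.peano_ind.
    - reflexivity.
    - rewrite <- Z.add_1_r, Step. lia.
    - assert (E := Step (Z.pred k)). replace (Z.pred k + 1)%Z with k in E by lia. lia. }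
  exists (s 0%Z). intro y.
  destruct (canon b1 b2 Hb y) as [i [w [nw ->]]]. rewrite Phi0_qmap.
  destruct (classic (w = b1)) as [->|nb].
  - assert (J : qmap b1 b2 (i, b1) = qmap b1 b2 ((i-1)%Z, b2)).
    { apply qmap_eq_iff, sig_sym. replace i with ((i-1)+1)%Z at 2 by lia. apply sig_jn. }
    rewrite J.
    assert (Hs2 := Hs i). replace i with ((i-1)+1)%Z in Hs2 by lia.
    destruct (SS_junc b1 b2 h (i-1)%Z _ _ Hb (Hs (i-1)%Z) Hs2) as [i0 [w0 [nw0 [E [A B]]]]].
    rewrite E. rewrite Step in B. apply qmap_eq_iff.
    destruct B as [B|[B ->]]; [lia|]. subst i0. rewrite Sm.
    replace (s 0%Z + i)%Z with ((i - 1 + s 0%Z) + 1)%Z by lia. apply sig_refl.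
  - rewrite (SS_interior b1 b2 h i (s i) w Hb (Hs i) nb nw). rewrite Sm. f_equal. f_equal. lia.
Qed.

Theorem mainTheorem3 (X : Type) (d : X -> X -> R) (b1 b2 : X) :
  deGroot_continuum d -> b1 <> b2 ->
  connected_space (Y_open d b1 b2) /\
  locally_compact (Y_open d b1 b2) /\
  exists Phi : Z -> Yq b1 b2 -> Yq b1 b2,
    (forall (m k : Z) (x : X), Phi m (qmap b1 b2 (k, x)) = qmap b1 b2 ((m + k)%Z, x)) /\
    (forall m, homeomorphism (Y_open d b1 b2) (Phi m)) /\
    (forall m n y, Phi (m + n)%Z y = Phi m (Phi n y)) /\
    (forall m n, (forall y, Phi m y = Phi n y) -> m = n) /\
    (forall h, homeomorphism (Y_open d b1 b2) h -> exists m, forall y, h y = Phi m y).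
Proof.
  intros Hd Hb. split; [apply Y_connected; auto|]. split; [apply Y_lc; auto|].
  assert (Cont : forall m, continuous (Y_open d b1 b2) (Y_open d b1 b2) (Phi0 b1 b2 m)).
  { intros m V HV k. apply (mo_ext d (fun x => V (qmap b1 b2 ((m + k)%Z, x)))).
    - intro x. rewrite Phi0_qmap. tauto.
    - exact (HV (m + k)%Z). }
  assert (Comp : forall m n y, Phi0 b1 b2 (m + n)%Z y = Phi0 b1 b2 m (Phi0 b1 b2 n y)).
  { intros m n y. destruct (qmap_surj b1 b2 y) as [[k x] <-]. rewrite !Phi0_qmap. f_equal. f_equal. lia. }
  assert (Zero : forall y, Phi0 b1 b2 0%Z y = y).
  { intro y. destruct (qmap_surj b1 b2 y) as [[k x] <-]. rewrite Phi0_qmap. reflexivity. }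
  exists (Phi0 b1 b2). split; [apply Phi0_qmap|]. split; [|split; [exact Comp|split]].
  - intro m. exists (Phi0 b1 b2 (-m)%Z). split; [|split; [|split; auto]].
    + intro y. rewrite <- Comp. replace (-m + m)%Z with 0%Z by lia. apply Zero.
    + intro y. rewrite <- Comp. replace (m + - m)%Z with 0%Z by lia. apply Zero.
  - intros m n H. destruct (third_point d b1 b2 Hd Hb) as [p [n1 n2]].
    assert (E := H (qmap b1 b2 (0%Z, p))). rewrite !Phi0_qmap in E.
    apply canon_inj in E; auto. lia.
  - intros h Hh. apply (classify d); auto.
Qed.
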